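(* Let $C$ be an étale topological category. Then $\Omega(C)$ is a restriction quantal frame.
   Context: Étale topological category: a small category $C$ (arrows, identities $C_o$, domain/codomain maps $\mathbf{d},\mathbf{r}$, $ab$ defined iff $\mathbf{d}(a)=\mathbf{r}(b)$) with a topology making $\mathbf{d}$, $\mathbf{r}$ and multiplication on $\{(a,b):\mathbf{d}(a)=\mathbf{r}(b)\}\subseteq C\times C$ continuous, such that $\mathbf{d}$ and $\mathbf{r}$ are local homeomorphisms. $\Omega(C)$: the open subsets of $C$ ordered by inclusion, with product $UV=\{uv:u\in U,v\in V,\mathbf{d}(u)=\mathbf{r}(v)\}$, identity $C_o$, $U^{\ast}=\mathbf{d}(U)$, $U^{+}=\mathbf{r}(U)$. An Ehresmann semigroup is a semigroup $S$ with a commutative subsemigroup $P$ of idempotents (projections) and unary operations $a\mapsto a^{\ast}$, $a\mapsto a^{+}$ with values in $P$, which are the identity on $P$, satisfying $aa^{\ast}=a$, $a^{+}a=a$, $(ab)^{\ast}=(a^{\ast}b)^{\ast}$, $(ab)^{+}=(ab^{+})^{+}$. A quantal frame is a frame $(Q,\le)$ with an associative multiplication distributing over arbitrary joins on both sides. A restriction quantal frame is a quantal frame $Q$ which is a monoid with identity $e$ and an Ehresmann semigroup with set of projections $e^{\downarrow}=\{x:x\le e\}$, with $\ast$ and $+$ preserving arbitrary joins, such that the top element $1$ is a join of partial isometries and the product of any two partial isometries is a partial isometry; here $a$ is a partial isometry if $b\le a$ implies $b=b^{+}a=ab^{\ast}$. *)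

(* Defs.v *)
From HB Require Import structures.
From mathcomp Require Import all_boot all_order.
From mathcomp Require Import all_classical all_reals all_analysis.
Set Implicit Arguments. Unset Strict Implicit. Unset Printing Implicit Defensive.
Local Open Scope classical_set_scope.

(* Local homeomorphism: every point has an open neighbourhood U on which f is
   injective, with f(U) open and f restricted to U an open map (continuity of f
   is assumed separately), i.e. f|_U : U -> f(U) is a homeomorphism onto an
   open set. *)
Definition local_homeo {T U : topologicalType} (f : T -> U) : Prop :=
  continuous f /\
  forall x : T, exists W : set T,
    [/\ open W, W x, open (f @` W),
        (forall a b, W a -> W b -> f a = f b -> a = b) &
        (forall V : set T, open V -> V `<=` W -> open (f @` V))].

(* Small category given by its arrows C, the set Co of identities, domain
   and codomain maps dom, cod, and multiplication mul (ab is defined iff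
   dom a = cod b; mul is an arbitrary total extension). *)
Definition composable {C : Type} (dom cod : C -> C) : set (C * C) :=
  [set p | dom p.1 = cod p.2].

Definition is_small_category {C : Type} (Co : set C) (dom cod : C -> C)
  (mul : C -> C -> C) : Prop :=
  [/\ (forall a, Co (dom a) /\ Co (cod a)),
      (forall e, Co e -> dom e = e /\ cod e = e),
      (forall a, mul a (dom a) = a /\ mul (cod a) a = a),
      (forall a b, dom a = cod b -> dom (mul a b) = dom b /\ cod (mul a b) = cod a) &
      (forall a b c, dom a = cod b -> dom b = cod c ->
         mul (mul a b) c = mul a (mul b c))].

Definition is_etale_category {C : topologicalType} (Co : set C)
  (dom cod : C -> C) (mul : C -> C -> C) : Prop :=
  [/\ is_small_category Co dom cod mul,
      {within composable dom cod, continuous (fun p : C * C => mul p.1 p.2)},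
      local_homeo dom & local_homeo cod].

Definition set_prod {C : Type} (dom cod : C -> C) (mul : C -> C -> C)
  (U V : set C) : set C :=
  [set x | exists u v, [/\ U u, V v, dom u = cod v & x = mul u v]].

Definition Omega (C : topologicalType) := {U : set C | open U}.

Section Abstract.
Variables (Q : Type) (le : Q -> Q -> Prop).

Definition is_lub (S : set Q) (j : Q) : Prop :=
  (forall s, S s -> le s j) /\ (forall u, (forall s, S s -> le s u) -> le j u).

Definition is_glb2 (a b m : Q) : Prop :=
  [/\ le m a, le m b & forall u, le u a -> le u b -> le u m].

Definition is_frame : Prop :=
  [/\ ((forall a, le a a) /\
       (forall a b c, le a b -> le b c -> le a c) /\
       (forall a b, le a b -> le b a -> a = b)),
      (forall S : set Q, exists j, is_lub S j),
      (forall a b, exists m, is_glb2 a b m) &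
      (forall a (S : set Q) j m, is_lub S j -> is_glb2 a j m ->
         is_lub [set x | exists2 s, S s & is_glb2 a s x] m)].

Variable mul : Q -> Q -> Q.

Definition is_quantal_frame : Prop :=
  [/\ is_frame,
      (forall a b c, mul (mul a b) c = mul a (mul b c)) &
      (forall a (S : set Q) j, is_lub S j ->
         is_lub [set mul a s | s in S] (mul a j) /\
         is_lub [set mul s a | s in S] (mul j a))].

Variables (e : Q) (star plus : Q -> Q).

Definition projection (p : Q) : Prop := le p e.

Definition is_ehresmann (P : set Q) : Prop :=
  [/\ ((forall p q, P p -> P q -> P (mul p q) /\ mul p q = mul q p) /\
       (forall p, P p -> mul p p = p)),
      (forall a, P (star a) /\ P (plus a)),
      (forall p, P p -> star p = p /\ plus p = p),
      (forall a, mul a (star a) = a /\ mul (plus a) a = a) &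
      (forall a b, star (mul a b) = star (mul (star a) b) /\
                   plus (mul a b) = plus (mul a (plus b)))].

Definition partial_isometry (a : Q) : Prop :=
  forall b, le b a -> b = mul (plus b) a /\ b = mul a (star b).

Definition is_restriction_quantal_frame : Prop :=
  [/\ (is_quantal_frame /\
       (forall a, mul e a = a /\ mul a e = a)),
      is_ehresmann projection,
      (forall (S : set Q) j, is_lub S j ->
         is_lub (star @` S) (star j) /\ is_lub (plus @` S) (plus j)),
      (exists top, (forall x, le x top) /\ is_lub partial_isometry top) &
      (forall a b, partial_isometry a -> partial_isometry b ->
         partial_isometry (mul a b))].

End Abstract.

(* Main.v *)
Require Import Defs.
From mathcomp Require Import all_boot all_order.
From mathcomp Require Import all_classical all_reals all_analysis.
Local Open Scope classical_set_scope.

Lemma lh_open {T U : topologicalType} {f : T -> U} :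
  local_homeo f -> forall V, open V -> open (f @` V).
Proof.
move=> [fc lh] V oV.
have -> : f @` V = \bigcup_(x in V) (f @` (V `&` (sval (cid (lh x))))).
  apply/seteqP; split => y.
    move=> [x Vx <-]; exists x => //.
    case: (cid (lh x)) => W /= [_ Wx _ _ _]; by exists x.
  by move=> [x _ [z [Vz _] <-]]; exists z.
apply: bigcup_open => x _.
case: (cid (lh x)) => W /= [oW _ _ _ hW].
by apply: hW; [exact: openI | exact: subIsetr].
Qed.

Lemma within_cont_ex {C : topologicalType} (A : set (C * C)) (g : C * C -> C) :
  {within A, continuous g} -> forall x, A x -> forall W, open W -> W (g x) ->
  exists P Q, [/\ open P, open Q, P x.1, Q x.2 &
    forall a b, P a -> Q b -> A (a, b) -> W (g (a, b))].
Proof.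
move=> /subspace_continuousP hc x Ax W oW Wgx.
have := hc x Ax W.
have hW : nbhs (g x) W by apply: open_nbhs_nbhs.
move=> /(_ hW).
rewrite /= /within /=.
move=> [[P Q] /= [nP nQ] sPQ].
move: nP; rewrite nbhsE => -[P' [oP' P'x] sP'].
move: nQ; rewrite nbhsE => -[Q' [oQ' Q'x] sQ'].
exists P', Q'; split => // a b Pa Qb Aab.
have := sPQ (a, b); apply => //.
by split; [apply: sP' | apply: sQ'].
Qed.

Lemma prod_open {C : topologicalType} {Co : set C} {dom cod mul} :
  is_etale_category Co dom cod mul -> forall U V, open U -> open V ->
  open (set_prod dom cod mul U V).
Proof.
move=> [[h1 h2 h3 h4 h5] mc ld lc] U V oU oV.
rewrite openE => x [u [v [Uu Vv duv ->]]].
have [dc ldx] := ld.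
have [cc _] := lc.
have [W [oW Wx _ iW _]] := ldx (mul u v).
have [P [Q [oP oQ Pu Qv hPQ]]] :=
  @within_cont_ex _ _ _ mc (u, v) duv W oW Wx.
set A := P `&` U.
have oA : open A by exact: openI.
set B := (Q `&` V) `&` (cod @^-1` (dom @` A)).
have oB : open B.
  apply: openI; first exact: openI.
  by move/continuousP: cc; apply; apply: lh_open.
set O := W `&` (dom @^-1` (dom @` B)).
have oO : open O.
  apply: openI => //.
  by move/continuousP: dc; apply; apply: lh_open.
rewrite /interior nbhsE; exists O.
  split => //; split => //.
  exists v.
    split; first by split.
    by exists u => //; split.
  by rewrite (proj1 (h4 _ _ duv)).
move=> y [Wy [b [[Qb Vb] [a [Pa Ua] dab]] dby]].
exists a, b; split => //.
apply: iW => //.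
  by apply: hPQ.
by rewrite (proj1 (h4 _ _ dab)).
Qed.
Lemma prodA {C : Type} {Co : set C} {dom cod mul} :
  is_small_category Co dom cod mul -> forall U V W,
  set_prod dom cod mul (set_prod dom cod mul U V) W =
  set_prod dom cod mul U (set_prod dom cod mul V W).
Proof.
move=> [h1 h2 h3 h4 h5] U V W; apply/seteqP; split => x.
- move=> [y [w [[u [v [Uu Vv duv ->]]] Ww dyw ->]]].
  have [d1 c1] := h4 _ _ duv.
  have dvw : dom v = cod w by rewrite -d1.
  have [d2 c2] := h4 _ _ dvw.
  exists u, (mul v w); split => //; first by exists v, w.
  by rewrite c2.
  by rewrite h5.
- move=> [u [y [Uu [v [w [Vv Ww dvw ->]]] duy ->]]].
  have [d2 c2] := h4 _ _ dvw.
  have duv : dom u = cod v by rewrite duy c2.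
  have [d1 c1] := h4 _ _ duv.
  exists (mul u v), w; split => //; first by exists u, v.
  by rewrite d1.
  by rewrite h5.
Qed.

Lemma prod_bigcupr {C I : Type} (dom cod : C -> C) mul U (D : set I) (F : I -> set C) :
  set_prod dom cod mul U (\bigcup_(i in D) F i) =
  \bigcup_(i in D) set_prod dom cod mul U (F i).
Proof.
apply/seteqP; split => x.
- move=> [u [v [Uu [i Di Fv] duv ->]]]; exists i => //; by exists u, v.
- move=> [i Di [u [v [Uu Fv duv ->]]]]; exists u, v; split => //; by exists i.
Qed.

Lemma prod_bigcupl {C I : Type} (dom cod : C -> C) mul U (D : set I) (F : I -> set C) :
  set_prod dom cod mul (\bigcup_(i in D) F i) U =
  \bigcup_(i in D) set_prod dom cod mul (F i) U.
Proof.
apply/seteqP; split => x.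
- move=> [u [v [[i Di Fu] Uv duv ->]]]; exists i => //; by exists u, v.
- move=> [i Di [u [v [Fu Uv duv ->]]]]; exists u, v; split => //; by exists i.
Qed.

Lemma prodCol {C : Type} {Co : set C} {dom cod mul} :
  is_small_category Co dom cod mul -> forall U,
  set_prod dom cod mul Co U = U.
Proof.
move=> [h1 h2 h3 h4 h5] U; apply/seteqP; split => x.
- move=> [e [u [Ce Uu deu ->]]].
  have [de _] := h2 _ Ce.
  by rewrite -de deu (proj2 (h3 u)).
- move=> Ux; exists (cod x), x; split => //.
  exact: (proj2 (h1 x)).
  exact: (proj1 (h2 _ (proj2 (h1 x)))).
  by rewrite (proj2 (h3 x)).
Qed.

Lemma prodCor {C : Type} {Co : set C} {dom cod mul} :
  is_small_category Co dom cod mul -> forall U,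
  set_prod dom cod mul U Co = U.
Proof.
move=> [h1 h2 h3 h4 h5] U; apply/seteqP; split => x.
- move=> [u [e [Uu Ce due ->]]].
  have [_ ce] := h2 _ Ce.
  by rewrite -ce -due (proj1 (h3 u)).
- move=> Ux; exists x, (dom x); split => //.
  exact: (proj1 (h1 x)).
  by rewrite (proj2 (h2 _ (proj1 (h1 x)))).
  by rewrite (proj1 (h3 x)).
Qed.

Lemma prod_proj {C : Type} {Co : set C} {dom cod mul} :
  is_small_category Co dom cod mul -> forall U V, U `<=` Co -> V `<=` Co ->
  set_prod dom cod mul U V = U `&` V.
Proof.
move=> [h1 h2 h3 h4 h5] U V UC VC; apply/seteqP; split => x.
- move=> [u [v [Uu Vv duv ->]]].
  have [du _] := h2 _ (UC _ Uu).
  have [_ cv] := h2 _ (VC _ Vv).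
  have uv : u = v by rewrite -du duv cv.
  subst v. have := proj2 (h3 u). rewrite cv => ->. by split.
- move=> [Ux Vx]; exists x, x; split => //.
  by rewrite (proj1 (h2 _ (UC _ Ux))) (proj2 (h2 _ (UC _ Ux))).
  have := proj2 (h3 x). by rewrite (proj2 (h2 _ (UC _ Ux))).
Qed.

Lemma dom_Co {C : Type} {Co : set C} {dom cod mul} :
  is_small_category Co dom cod mul -> forall U, U `<=` Co -> dom @` U = U.
Proof.
move=> [h1 h2 h3 h4 h5] U UC; apply/seteqP; split => x.
- by move=> [u Uu <-]; rewrite (proj1 (h2 _ (UC _ Uu))).
- by move=> Ux; exists x => //; rewrite (proj1 (h2 _ (UC _ Ux))).
Qed.

Lemma cod_Co {C : Type} {Co : set C} {dom cod mul} :
  is_small_category Co dom cod mul -> forall U, U `<=` Co -> cod @` U = U.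
Proof.
move=> [h1 h2 h3 h4 h5] U UC; apply/seteqP; split => x.
- by move=> [u Uu <-]; rewrite (proj2 (h2 _ (UC _ Uu))).
- by move=> Ux; exists x => //; rewrite (proj2 (h2 _ (UC _ Ux))).
Qed.

Lemma prod_star {C : Type} {Co : set C} {dom cod mul} :
  is_small_category Co dom cod mul -> forall U,
  set_prod dom cod mul U (dom @` U) = U.
Proof.
move=> [h1 h2 h3 h4 h5] U; apply/seteqP; split => x.
- move=> [u [e [Uu [w Uw <-] due ->]]].
  rewrite (proj2 (h2 _ (proj1 (h1 w)))) in due.
  by rewrite -due (proj1 (h3 u)).
- move=> Ux; exists x, (dom x); split.
  + exact: Ux.
  + by exists x.
  + by rewrite (proj2 (h2 _ (proj1 (h1 x)))).
  + by rewrite (proj1 (h3 x)).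
Qed.

Lemma prod_plus {C : Type} {Co : set C} {dom cod mul} :
  is_small_category Co dom cod mul -> forall U,
  set_prod dom cod mul (cod @` U) U = U.
Proof.
move=> [h1 h2 h3 h4 h5] U; apply/seteqP; split => x.
- move=> [e [u [[w Uw <-] Uu deu ->]]].
  rewrite (proj1 (h2 _ (proj2 (h1 w)))) in deu.
  by rewrite deu (proj2 (h3 u)).
- move=> Ux; exists (cod x), x; split.
  + by exists x.
  + exact: Ux.
  + by rewrite (proj1 (h2 _ (proj2 (h1 x)))).
  + by rewrite (proj2 (h3 x)).
Qed.

Lemma star_prod {C : Type} {Co : set C} {dom cod mul} :
  is_small_category Co dom cod mul -> forall U V,
  dom @` set_prod dom cod mul U V = dom @` set_prod dom cod mul (dom @` U) V.
Proof.
move=> [h1 h2 h3 h4 h5] U V; apply/seteqP; split => x.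
- move=> [y [u [v [Uu Vv duv ->]]] <-].
  exists (mul (dom u) v).
    exists (dom u), v; split => //; try by exists u.
    by rewrite (proj1 (h2 _ (proj1 (h1 u)))).
  rewrite (proj1 (h4 _ _ duv)).
  have e : dom (dom u) = cod v by rewrite (proj1 (h2 _ (proj1 (h1 u)))).
  by rewrite (proj1 (h4 _ _ e)).
- move=> [y [e [v [[u Uu <-] Vv duv ->]]] <-].
  rewrite (proj1 (h4 _ _ duv)).
  rewrite (proj1 (h2 _ (proj1 (h1 u)))) in duv.
  exists (mul u v); first by exists u, v.
  by rewrite (proj1 (h4 _ _ duv)).
Qed.

Lemma plus_prod {C : Type} {Co : set C} {dom cod mul} :
  is_small_category Co dom cod mul -> forall U V,
  cod @` set_prod dom cod mul U V = cod @` set_prod dom cod mul U (cod @` V).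
Proof.
move=> [h1 h2 h3 h4 h5] U V; apply/seteqP; split => x.
- move=> [y [u [v [Uu Vv duv ->]]] <-].
  exists (mul u (cod v)).
    exists u, (cod v); split => //; try by exists v.
    by rewrite (proj2 (h2 _ (proj2 (h1 v)))).
  rewrite (proj2 (h4 _ _ duv)).
  have e : dom u = cod (cod v) by rewrite (proj2 (h2 _ (proj2 (h1 v)))).
  by rewrite (proj2 (h4 _ _ e)).
- move=> [y [u [e [Uu [v Vv <-] duv ->]]] <-].
  rewrite (proj2 (h4 _ _ duv)).
  rewrite (proj2 (h2 _ (proj2 (h1 v)))) in duv.
  exists (mul u v); first by exists u, v.
  by rewrite (proj2 (h4 _ _ duv)).
Qed.

Definition injon {C : Type} (f : C -> C) (A : set C) :=
  forall a b, A a -> A b -> f a = f b -> a = b.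

Lemma bisec_plus {C : Type} {Co : set C} {dom cod mul} :
  is_small_category Co dom cod mul -> forall A B, injon cod A -> B `<=` A ->
  B = set_prod dom cod mul (cod @` B) A.
Proof.
move=> [h1 h2 h3 h4 h5] A B iA BA; apply/seteqP; split => x.
- move=> Bx; exists (cod x), x; split.
  + by exists x.
  + exact: BA.
  + by rewrite (proj1 (h2 _ (proj2 (h1 x)))).
  + by rewrite (proj2 (h3 x)).
- move=> [e [u [[w Bw <-] Au deu ->]]].
  rewrite (proj1 (h2 _ (proj2 (h1 w)))) in deu.
  have wu := iA _ _ (BA _ Bw) Au deu. subst u.
  by rewrite (proj2 (h3 w)).
Qed.

Lemma bisec_star {C : Type} {Co : set C} {dom cod mul} :
  is_small_category Co dom cod mul -> forall A B, injon dom A -> B `<=` A ->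
  B = set_prod dom cod mul A (dom @` B).
Proof.
move=> [h1 h2 h3 h4 h5] A B iA BA; apply/seteqP; split => x.
- move=> Bx; exists x, (dom x); split.
  + exact: BA.
  + by exists x.
  + by rewrite (proj2 (h2 _ (proj1 (h1 x)))).
  + by rewrite (proj1 (h3 x)).
- move=> [u [e [Au [w Bw <-] due ->]]].
  rewrite (proj2 (h2 _ (proj1 (h1 w)))) in due.
  have wu := iA _ _ Au (BA _ Bw) due. subst u.
  by rewrite (proj1 (h3 w)).
Qed.

Lemma injon_prod {C : Type} {Co : set C} {dom cod mul} :
  is_small_category Co dom cod mul -> forall A B,
  injon dom A -> injon cod A -> injon dom B -> injon cod B ->
  injon dom (set_prod dom cod mul A B) /\ injon cod (set_prod dom cod mul A B).
Proof.
move=> [h1 h2 h3 h4 h5] A B dA cA dB cB; split.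
- move=> x y [u [v [Au Bv duv ->]]] [u' [v' [Au' Bv' duv' ->]]].
  rewrite (proj1 (h4 _ _ duv)) (proj1 (h4 _ _ duv')) => e.
  have vv := dB _ _ Bv Bv' e; subst v'.
  have uu := dA _ _ Au Au' (etrans duv (esym duv')); by subst u'.
- move=> x y [u [v [Au Bv duv ->]]] [u' [v' [Au' Bv' duv' ->]]].
  rewrite (proj2 (h4 _ _ duv)) (proj2 (h4 _ _ duv')) => e.
  have uu := cA _ _ Au Au' e; subst u'.
  have vv := cB _ _ Bv Bv' (etrans (esym duv) duv'); by subst v'.
Qed.

Lemma Omega_eq {C : topologicalType} (U V : Omega C) :
  proj1_sig U = proj1_sig V -> U = V.
Proof.
case: U => U oU; case: V => V oV /= e; subst V; f_equal; exact: Prop_irrelevance.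
Qed.

Theorem mainTheorem3 (C : topologicalType) (Co : set C) (dom cod : C -> C)
    (mul : C -> C -> C) :
  is_etale_category Co dom cod mul ->
  exists (mulO : Omega C -> Omega C -> Omega C) (eO : Omega C)
         (starO plusO : Omega C -> Omega C),
    [/\ (forall U V : Omega C,
           proj1_sig (mulO U V) = set_prod dom cod mul (proj1_sig U) (proj1_sig V)),
        proj1_sig eO = Co,
        (forall U : Omega C, proj1_sig (starO U) = dom @` (proj1_sig U)),
        (forall U : Omega C, proj1_sig (plusO U) = cod @` (proj1_sig U)) &
        is_restriction_quantal_frame
          (fun U V : Omega C => proj1_sig U `<=` proj1_sig V)
          mulO eO starO plusO].
Proof.
move=> Het; have Het' := Het.
case: Het' => [hc mc ld lc].
have hc' := hc; case: hc' => [h1 h2 h3 h4 h5].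
have oimd : forall U : Omega C, open (dom @` proj1_sig U).
  by move=> U; apply: lh_open ld _ (proj2_sig U).
have oimc : forall U : Omega C, open (cod @` proj1_sig U).
  by move=> U; apply: lh_open lc _ (proj2_sig U).
have oCo : open Co.
  have -> : Co = dom @` setT.
    apply/seteqP; split => x.
      by move=> Cx; exists x => //; exact: (proj1 (h2 _ Cx)).
    by move=> [y _ <-]; exact: (proj1 (h1 y)).
  exact: (lh_open ld _ (@openT C)).
pose mulO (U V : Omega C) : Omega C :=
  exist _ _ (prod_open Het _ _ (proj2_sig U) (proj2_sig V)).
pose eO : Omega C := exist _ Co oCo.
pose starO (U : Omega C) : Omega C := exist _ _ (oimd U).
pose plusO (U : Omega C) : Omega C := exist _ _ (oimc U).
exists mulO, eO, starO, plusO; split => //.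
have lubI : forall (S : set (Omega C)) j,
    is_lub (fun U V : Omega C => proj1_sig U `<=` proj1_sig V) S j ->
    proj1_sig j = \bigcup_(s in S) proj1_sig s.
  move=> S j [ub lst].
  have oJ : open (\bigcup_(s in S) proj1_sig s).
    by apply: bigcup_open => s _; exact: proj2_sig.
  apply/seteqP; split.
    apply: (lst (exist _ _ oJ)) => s Ss z sz /=; by exists s.
  by move=> z [s Ss sz]; exact: ub s Ss z sz.
have lubP : forall (S : set (Omega C)) j,
    proj1_sig j = \bigcup_(s in S) proj1_sig s ->
    is_lub (fun U V : Omega C => proj1_sig U `<=` proj1_sig V) S j.
  move=> S j e; split => /=; rewrite e.
    by move=> s Ss z sz; exists s.
  by move=> u hu z [s Ss sz]; exact: hu s Ss z sz.
have glbI : forall a b m,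
    is_glb2 (fun U V : Omega C => proj1_sig U `<=` proj1_sig V) a b m ->
    proj1_sig m = proj1_sig a `&` proj1_sig b.
  move=> a b m [ma mb hm].
  have oI : open (proj1_sig a `&` proj1_sig b) by apply: openI; exact: proj2_sig.
  apply/seteqP; split.
    by move=> z mz; split; [exact: ma | exact: mb].
  by apply: (hm (exist _ _ oI)) => z [].
have glbP : forall a b : Omega C,
    is_glb2 (fun U V : Omega C => proj1_sig U `<=` proj1_sig V) a b
      (exist _ _ (openI (proj2_sig a) (proj2_sig b))).
  move=> a b; split => /=.
  - by move=> z [].
  - by move=> z [].
  - by move=> u ua ub z uz; split; [exact: ua | exact: ub].
have pi_inj : forall a : Omega C,
    partial_isometry (fun U V : Omega C => proj1_sig U `<=` proj1_sig V)
      mulO starO plusO a ->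
    injon dom (proj1_sig a) /\ injon cod (proj1_sig a).
  move=> a pa; split.
  - move=> x y ax ay dxy.
    have [_ ldx] := ld.
    have [W [oW Wx _ iW _]] := ldx x.
    have oB : open (proj1_sig a `&` W) by apply: openI => //; exact: proj2_sig.
    have [_ e2] := pa (exist _ _ oB) (@subIsetl _ _ _).
    have := f_equal (@proj1_sig _ _) e2 => /= e3.
    have yB : (proj1_sig a `&` W) y.
      rewrite e3; exists y, (dom y); split => //.
      + by exists x.
      + by rewrite (proj2 (h2 _ (proj1 (h1 y)))).
      + by rewrite (proj1 (h3 y)).
    by apply: iW => //; case: yB.
  - move=> x y ax ay dxy.
    have [_ ldx] := lc.
    have [W [oW Wx _ iW _]] := ldx x.
    have oB : open (proj1_sig a `&` W) by apply: openI => //; exact: proj2_sig.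
    have [e2 _] := pa (exist _ _ oB) (@subIsetl _ _ _).
    have := f_equal (@proj1_sig _ _) e2 => /= e3.
    have yB : (proj1_sig a `&` W) y.
      rewrite e3; exists (cod y), y; split => //.
      + by exists x.
      + by rewrite (proj1 (h2 _ (proj2 (h1 y)))).
      + by rewrite (proj2 (h3 y)).
    by apply: iW => //; case: yB.
have inj_pi : forall a : Omega C,
    injon dom (proj1_sig a) -> injon cod (proj1_sig a) ->
    partial_isometry (fun U V : Omega C => proj1_sig U `<=` proj1_sig V)
      mulO starO plusO a.
  move=> a ida ica b ba; split; apply: Omega_eq => /=.
  - exact: (bisec_plus hc _ _ ica ba).
  - exact: (bisec_star hc _ _ ida ba).
split.
- split.
  + split.
    * split.
      -- split; first by move=> a.
         split; first by move=> a b c ab bc; exact: subset_trans ab bc.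
         by move=> a b ab ba; apply: Omega_eq; apply/seteqP; split.
      -- move=> S.
         have oJ : open (\bigcup_(s in S) proj1_sig s).
           by apply: bigcup_open => s _; exact: proj2_sig.
         by exists (exist _ _ oJ); apply: lubP.
      -- by move=> a b; eexists; exact: glbP.
      -- move=> a S j m lj gm; apply: lubP.
         rewrite (glbI _ _ _ gm) (lubI _ _ lj).
         apply/seteqP; split.
         ++ move=> z [az [s Ss sz]].
            exists (exist _ _ (openI (proj2_sig a) (proj2_sig s))) => //.
            by exists s => //; exact: glbP.
         ++ move=> z [x [s Ss gx] xz].
            rewrite (glbI _ _ _ gx) in xz; case: xz => az sz.
            by split => //; exists s.
    * move=> a b c; apply: Omega_eq => /=; exact: prodA.
    * move=> a S j lj; split; apply: lubP => /=; rewrite bigcup_image /= (lubI _ _ lj).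
      -- exact: prod_bigcupr.
      -- exact: prod_bigcupl.
  + move=> a; split; apply: Omega_eq => /=.
    * exact: prodCol.
    * exact: prodCor.
- split.
  + split.
    * move=> p q pC qC; rewrite /projection /= in pC qC *.
      rewrite (prod_proj hc _ _ pC qC); split; first by move=> z [] /pC.
      apply: Omega_eq => /=; rewrite (prod_proj hc _ _ qC pC) (prod_proj hc _ _ pC qC); exact: setIC.
    * move=> p pC; rewrite /projection /= in pC.
      apply: Omega_eq => /=; rewrite (prod_proj hc _ _ pC pC); exact: setIid.
  + move=> a; rewrite /projection /=; split.
    * by move=> z [y _ <-]; exact: (proj1 (h1 y)).
    * by move=> z [y _ <-]; exact: (proj2 (h1 y)).
  + move=> p pC; rewrite /projection /= in pC; split; apply: Omega_eq => /=.
    * exact: (dom_Co hc).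
    * exact: (cod_Co hc).
  + move=> a; split; apply: Omega_eq => /=.
    * exact: (prod_star hc).
    * exact: (prod_plus hc).
  + move=> a b; split; apply: Omega_eq => /=.
    * exact: (star_prod hc).
    * exact: (plus_prod hc).
- move=> S j lj; split; apply: lubP => /=; rewrite bigcup_image /= (lubI _ _ lj);
    exact: image_bigcup.
- exists (exist _ _ (@openT C)); split; first by move=> x z.
  split; first by move=> s _ z.
  move=> u hu z _.
  have [_ ldx] := ld.
  have [_ lcx] := lc.
  have [W1 [oW1 W1z _ iW1 _]] := ldx z.
  have [W2 [oW2 W2z _ iW2 _]] := lcx z.
  have oB : open (W1 `&` W2) by exact: openI.
  apply: (hu (exist _ _ oB)) => /=; last by split.
  apply: inj_pi => /=.
  + by move=> x y [? ?] [? ?]; apply: iW1.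
  + by move=> x y [? ?] [? ?]; apply: iW2.
- move=> a b pa pb.
  have [da ca] := pi_inj a pa.
  have [db cb] := pi_inj b pb.
  have [dab cab] := injon_prod hc _ _ da ca db cb.
  exact: inj_pi.
Qed.
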